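(* Let $G$ be an infinite locally finite graph and let $F$ be a spanning subgraph of $G$ that is faithful to $G$. If $F$ has a Hamiltonian circle, then $G$ has a Hamiltonian circle.
   Context: A ray is a one-way infinite path; two rays of a graph $H$ are equivalent in $H$ if for every finite $S\subseteq V(H)$ some component of $H-S$ contains tails of both; the classes are the ends of $H$. For finite $S$ and an end $\alpha$, $C(S,\alpha)$ is the component of $H-S$ containing tails of rays of $\alpha$. The Freudenthal compactification $|H|$ is the 1-complex of $H$ together with its ends, a basic open neighbourhood of an end $\alpha$ being, for finite $S$, the union of $C(S,\alpha)$, the ends whose rays have tails in $C(S,\alpha)$, and the inner points of edges between $S$ and $C(S,\alpha)$. A Hamiltonian circle of $H$ is the image of a homeomorphic embedding of $S^1$ into $|H|$ containing every vertex of $H$. A subgraph $F$ of $G$ is faithful to $G$ if (i) every end of $G$ contains a ray of $F$, and (ii) any two rays of $F$ are equivalent in $F$ if and only if they are equivalent in $G$. *)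

(* Defs.v *)
From Stdlib Require Import Reals List Relations.
Open Scope R_scope.

Section Graphs.
Variable V : Type.

Definition graph (H : V -> V -> Prop) : Prop :=
  (forall u v, H u v -> H v u) /\ (forall v, ~ H v v).

Definition subgraph (F G : V -> V -> Prop) : Prop := forall u v, F u v -> G u v.

Definition locally_finite (H : V -> V -> Prop) : Prop :=
  forall v, exists l : list V, forall u, H v u -> In u l.

Definition infinite_type : Prop := ~ exists l : list V, forall v, In v l.

Definition conn (H : V -> V -> Prop) (S : list V) (x y : V) : Prop :=
  ~ In x S /\ ~ In y S /\
  clos_refl_trans V (fun a b => H a b /\ ~ In a S /\ ~ In b S) x y.

Definition is_ray (H : V -> V -> Prop) (r : nat -> V) : Prop :=
  (forall n, H (r n) (r (S n))) /\ (forall m n, r m = r n -> m = n).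

Definition tail_in (H : V -> V -> Prop) (S : list V) (r : nat -> V) (x : V) : Prop :=
  exists k, forall n, (k <= n)%nat -> conn H S x (r n).

Definition ray_equiv (H : V -> V -> Prop) (r1 r2 : nat -> V) : Prop :=
  forall S : list V, exists x, tail_in H S r1 x /\ tail_in H S r2 x.

Definition is_end (H : V -> V -> Prop) (a : (nat -> V) -> Prop) : Prop :=
  exists r, is_ray H r /\ forall r', a r' <-> (is_ray H r' /\ ray_equiv H r r').

Definition faithful (F G : V -> V -> Prop) : Prop :=
  (forall r, is_ray G r -> exists r', is_ray F r' /\ ray_equiv G r r') /\
  (forall r1 r2, is_ray F r1 -> is_ray F r2 ->
     (ray_equiv F r1 r2 <-> ray_equiv G r1 r2)).

(* Points of the Freudenthal compactification |H|: points of the 1-complex are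
   represented by barycentric weights w : V -> R (a vertex v is the indicator
   of v, an inner point of edge uv has w u, w v > 0, w u + w v = 1, zero
   elsewhere); ends are represented by their set of rays. *)
Inductive point : Type :=
| P1 : (V -> R) -> point
| PEnd : ((nat -> V) -> Prop) -> point.

Definition vtx_pt (v : V) (w : V -> R) : Prop :=
  w v = 1 /\ forall x, x <> v -> w x = 0.

Definition on_edge (H : V -> V -> Prop) (u v : V) (w : V -> R) : Prop :=
  H u v /\ 0 < w u /\ 0 < w v /\ w u + w v = 1 /\
  forall x, x <> u -> x <> v -> w x = 0.

Definition valid (H : V -> V -> Prop) (p : point) : Prop :=
  match p with
  | P1 w => (exists v, vtx_pt v w) \/ (exists u v, on_edge H u v w)
  | PEnd a => is_end H a
  end.

Definition in_C (H : V -> V -> Prop) (S : list V) (a : (nat -> V) -> Prop) (x : V) : Prop :=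
  exists r, a r /\ tail_in H S r x.

Definition Chat (H : V -> V -> Prop) (S : list V) (a : (nat -> V) -> Prop) (q : point) : Prop :=
  valid H q /\
  ((exists x w, q = P1 w /\ vtx_pt x w /\ in_C H S a x) \/
   (exists x y w, q = P1 w /\ on_edge H x y w /\ (in_C H S a x \/ in_C H S a y)) \/
   (exists b, q = PEnd b /\ exists r x, b r /\ in_C H S a x /\ tail_in H S r x)).

Definition has_nbhd (H : V -> V -> Prop) (p : point) (O : point -> Prop) : Prop :=
  (exists v w, p = P1 w /\ vtx_pt v w /\
     exists eps, 0 < eps /\
       forall w', valid H (P1 w') -> 1 - eps < w' v -> O (P1 w')) \/
  (exists u v w, p = P1 w /\ on_edge H u v w /\
     exists eps, 0 < eps /\
       forall w', on_edge H u v w' -> Rabs (w' u - w u) < eps -> O (P1 w')) \/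
  (exists a, p = PEnd a /\ exists S : list V, forall q, Chat H S a q -> O q).

Definition open_in (H : V -> V -> Prop) (O : point -> Prop) : Prop :=
  forall p, valid H p -> O p -> has_nbhd H p O.

End Graphs.

Arguments P1 {V} _.
Arguments PEnd {V} _.

Definition on_circle (z : R * R) : Prop := fst z * fst z + snd z * snd z = 1.

Definition circ_open (U : R * R -> Prop) : Prop :=
  forall z, on_circle z -> U z ->
    exists eps, 0 < eps /\ forall z', on_circle z' ->
      Rabs (fst z' - fst z) < eps -> Rabs (snd z' - snd z) < eps -> U z'.

(* H has a Hamiltonian circle: the image of a homeomorphic embedding
   f : S^1 -> |H| containing every vertex. *)
Definition has_ham_circle {V : Type} (H : V -> V -> Prop) : Prop :=
  exists f : R * R -> point V,
    (forall z, on_circle z -> valid V H (f z)) /\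
    (forall z z', on_circle z -> on_circle z' -> f z = f z' -> z = z') /\
    (forall O, open_in V H O -> circ_open (fun z => O (f z))) /\
    (forall U, circ_open U -> exists W, open_in V H W /\
        forall z, on_circle z -> (U z <-> W (f z))) /\
    (forall v, exists z, on_circle z /\ exists w, f z = P1 w /\ vtx_pt V v w).

(* Main.v *)
Require Import Defs.
From Stdlib Require Import Reals List Relations Lra Lia Classical FunctionalExtensionality PropExtensionality.
Open Scope R_scope.

Section Basic.
Variable V : Type.

Lemma crt_sym (R0 : V -> V -> Prop) : (forall a b, R0 a b -> R0 b a) ->
  forall x y, clos_refl_trans V R0 x y -> clos_refl_trans V R0 y x.
Proof. intros Hs x y H; induction H; eauto using clos_refl_trans. Qed.

Lemma conn_sym H S x y : graph V H -> conn V H S x y -> conn V H S y x.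
Proof. intros [Hs _] [a [b c]]; split; [|split]; auto.
  apply crt_sym; auto. intros u v [h [h1 h2]]; auto. Qed.

Lemma conn_trans H S x y z : conn V H S x y -> conn V H S y z -> conn V H S x z.
Proof. intros [a [b c]] [d [e f]]; split; [|split]; auto. eapply rt_trans; eauto. Qed.

Lemma conn_monoH F G S x y : subgraph V F G -> conn V F S x y -> conn V G S x y.
Proof. intros Hsub [a [b c]]; split; [|split]; auto.
  clear a b; induction c as [u v h| |]; [apply rt_step; destruct h as [h [h1 h2]]; auto|apply rt_refl|eapply rt_trans; eauto]. Qed.

Lemma conn_monoS H S1 S2 x y : (forall z, In z S1 -> In z S2) -> conn V H S2 x y -> conn V H S1 x y.
Proof. intros Hi [a [b c]]; split; [|split]; [intro; apply a; auto|intro; apply b; auto|].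
  clear a b; induction c as [u v h| |]; [apply rt_step; destruct h as [h [h1 h2]]; split; [|split]; auto|apply rt_refl|eapply rt_trans; eauto]. Qed.

Lemma tail_conn H S r x y : tail_in V H S r x -> conn V H S x y -> graph V H -> tail_in V H S r y.
Proof. intros [k Hk] Hc Hg; exists k; intros n hn. eapply conn_trans; [apply conn_sym; eauto|]; eauto. Qed.

Lemma tail_both H S r x y : graph V H -> tail_in V H S r x -> tail_in V H S r y -> conn V H S x y.
Proof. intros Hg [k Hk] [l Hl]. eapply conn_trans. apply (Hk (k+l)%nat); lia.
  apply conn_sym; auto. apply Hl; lia. Qed.

Lemma tail_monoH F G S r x : subgraph V F G -> tail_in V F S r x -> tail_in V G S r x.
Proof. intros Hs [k Hk]; exists k; intros; eapply conn_monoH; eauto. Qed.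

Lemma tail_monoS H S1 S2 r x : (forall z, In z S1 -> In z S2) -> tail_in V H S2 r x -> tail_in V H S1 r x.
Proof. intros Hs [k Hk]; exists k; intros; eapply conn_monoS; eauto. Qed.

Lemma in_C_notin H S a x : in_C V H S a x -> ~ In x S.
Proof. intros [r [_ [k Hk]]]. destruct (Hk k (le_n k)) as [h _]; auto. Qed.

Lemma ray_avoid H r L : is_ray V H r -> exists k, forall n, (k <= n)%nat -> ~ In (r n) L.
Proof. intros [_ Hi]. induction L as [|s L IH].
  - exists 0%nat; simpl; auto.
  - destruct IH as [k Hk]. destruct (classic (exists m, r m = s)) as [[m Hm]|Hn].
    + exists (Nat.max k (S m)). intros n hn [h|h].
      * subst. apply Hi in h. lia.
      * apply (Hk n); auto; lia.
    + exists k. intros n hn [h|h]. apply Hn; eauto. apply (Hk n); auto.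
Qed.

Lemma ray_tail H r L : is_ray V H r -> exists x, tail_in V H L r x.
Proof. intros Hr. destruct (ray_avoid H r L Hr) as [k Hk]. exists (r k), k.
  intros n hn. induction hn.
  - split; [|split]; auto. apply rt_refl.
  - eapply conn_trans; eauto. split; [|split]; auto. apply rt_step.
    split; [apply Hr|]. split; auto.
Qed.

Lemma requiv_refl H r : is_ray V H r -> ray_equiv V H r r.
Proof. intros Hr S. destruct (ray_tail H r S Hr) as [x Hx]; eauto. Qed.

Lemma requiv_sym H r1 r2 : ray_equiv V H r1 r2 -> ray_equiv V H r2 r1.
Proof. intros He S. destruct (He S) as [x [a b]]; eauto. Qed.

Lemma requiv_trans H r1 r2 r3 : graph V H -> ray_equiv V H r1 r2 -> ray_equiv V H r2 r3 -> ray_equiv V H r1 r3.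
Proof. intros Hg e1 e2 S. destruct (e1 S) as [x [a b]], (e2 S) as [y [c d]].
  exists x; split; auto. apply (tail_conn H S r3 y x); auto. apply (tail_both H S r2 y x); auto. Qed.

Lemma end_ray H a r : is_end V H a -> a r -> is_ray V H r.
Proof. intros [r0 [_ h]] ha. apply h in ha; tauto. Qed.

Lemma end_equiv H a r1 r2 : graph V H -> is_end V H a -> a r1 -> a r2 -> ray_equiv V H r1 r2.
Proof. intros Hg [r0 [_ h]] h1 h2. apply h in h1; apply h in h2.
  apply (requiv_trans H r1 r0 r2 Hg). apply requiv_sym; tauto. tauto. Qed.

Lemma end_ext H a b r1 r2 : graph V H -> is_end V H a -> is_end V H b -> a r1 -> b r2 ->
  ray_equiv V H r1 r2 -> a = b.
Proof. intros Hg Ha Hb h1 h2 he. pose proof Ha as [ra [Hra ha]]. pose proof Hb as [rb [Hrb hb]].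
  apply functional_extensionality; intro r; apply propositional_extensionality.
  rewrite ha, hb. assert (ray_equiv V H ra rb).
  { apply ha in h1; apply hb in h2. eapply requiv_trans; eauto. apply (proj2 h1).
    eapply requiv_trans; eauto. apply requiv_sym, h2. }
  split; intros [x y]; split; auto; eapply requiv_trans; eauto. apply requiv_sym; auto.
Qed.

Lemma in_C_monoS H S1 S2 a x : (forall z, In z S1 -> In z S2) -> in_C V H S2 a x -> in_C V H S1 a x.
Proof. intros h [r [ar t]]; exists r; split; auto; eapply tail_monoS; eauto. Qed.

Lemma in_C_any H S a r x : graph V H -> is_end V H a -> a r -> in_C V H S a x -> tail_in V H S r x.
Proof. intros Hg Ha ar [r' [ar' t]]. destruct (end_equiv H a r r' Hg Ha ar ar' S) as [y [t1 t2]].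
  eapply tail_conn; eauto. eapply tail_both; eauto. Qed.

End Basic.

Section Points.
Variable V : Type.
Variable H : V -> V -> Prop.
Hypothesis Hg : graph V H.

Lemma edge_pos u v w x : on_edge V H u v w -> 0 < w x -> x = u \/ x = v.
Proof. intros [_ [_ [_ [_ h]]]] hx. destruct (classic (x = u)); auto.
  destruct (classic (x = v)); auto. rewrite h in hx; auto; lra. Qed.

Lemma edge_neq u v w : on_edge V H u v w -> u <> v.
Proof. intros [h _] e; subst; apply (proj2 Hg v h). Qed.

Lemma edge_swap u v w : on_edge V H u v w -> on_edge V H v u w.
Proof. intros [h [a [b [c d]]]]; split; [apply (proj1 Hg); auto|].
  split; [|split; [|split]]; auto; lra. Qed.

Lemma vtx_not_edge x u v w : vtx_pt V x w -> on_edge V H u v w -> False.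
Proof. intros [h1 h2] He. pose proof He as [_ [a [b _]]].
  assert (u = x) by (destruct (classic (u = x)); auto; rewrite h2 in a; auto; lra).
  assert (v = x) by (destruct (classic (v = x)); auto; rewrite h2 in b; auto; lra).
  subst. apply (edge_neq _ _ _ He); auto. Qed.

Lemma vtx_uniq v v' w : vtx_pt V v w -> vtx_pt V v' w -> v = v'.
Proof. intros [a b] [c d]. destruct (classic (v = v')); auto. rewrite d in a; auto; lra. Qed.

Lemma vtx_eq v w w' : vtx_pt V v w -> vtx_pt V v w' -> w = w'.
Proof. intros [a b] [c d]. apply functional_extensionality; intro x.
  destruct (classic (x = v)). subst; lra. rewrite b, d; auto. Qed.

Lemma edge_support u v u' v' w : on_edge V H u v w -> on_edge V H u' v' w ->
  (u = u' /\ v = v') \/ (u = v' /\ v = u').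
Proof. intros e1 e2. pose proof e1 as [_ [a [b _]]].
  pose proof (edge_neq _ _ _ e1). pose proof (edge_neq _ _ _ e2).
  destruct (edge_pos _ _ _ u e2 a); destruct (edge_pos _ _ _ v e2 b); subst; tauto. Qed.

Lemma edge_eq u v w w' : on_edge V H u v w -> on_edge V H u v w' -> w u = w' u -> w = w'.
Proof. intros [_ [a [b [c d]]]] [_ [a' [b' [c' d']]]] e.
  apply functional_extensionality; intro x.
  destruct (classic (x = u)). subst; auto. destruct (classic (x = v)). subst; lra.
  rewrite d, d'; auto. Qed.

Lemma valid_bounds w : valid V H (P1 w) -> (forall x, 0 <= w x) /\ (forall x y, x <> y -> w x + w y <= 1).
Proof. intros [[v [a b]]|[u [v [h [a [c [d e]]]]]]]; split.
  - intros x. destruct (classic (x = v)). subst; lra. rewrite b; auto; lra.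
  - intros x y hxy. destruct (classic (x = v)); destruct (classic (y = v)); subst.
    tauto. rewrite (b y); auto; lra. rewrite (b x); auto; lra. rewrite b, b; auto; lra.
  - intros x. destruct (classic (x = u)). subst; lra. destruct (classic (x = v)). subst; lra. rewrite e; auto; lra.
  - assert (u <> v) by (intro; subst; apply (proj2 Hg v h)).
    assert (forall x, x <> u -> x <> v -> w x = 0) by auto.
    intros x y hxy.
    destruct (classic (x = u)); destruct (classic (x = v)); destruct (classic (y = u)); destruct (classic (y = v)); subst;
      try congruence; try lra; try (rewrite (e y); auto; lra); try (rewrite (e x); auto; lra).
    rewrite (e x), (e y); auto; lra.
Qed.

End Points.

Definition vnb V H (v : V) eps (q : point V) := exists w', q = P1 w' /\ valid V H (P1 w') /\ 1 - eps < w' v.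
Definition enb V H (u v : V) w eps (q : point V) := exists w', q = P1 w' /\ on_edge V H u v w' /\ Rabs (w' u - w u) < eps.
Definition good V H p (N : point V -> Prop) := open_in V H N /\ N p /\ has_nbhd V H p N.

Section Nbhd.
Variable V : Type.
Variable H : V -> V -> Prop.
Hypothesis Hg : graph V H.

Lemma edge_sum u v w : on_edge V H u v w -> w u + w v = 1 /\ 0 < w u /\ 0 < w v.
Proof. intros [_ [a [b [c _]]]]; auto. Qed.

Lemma has_nbhd_mono p (O O' : point V -> Prop) : has_nbhd V H p O -> (forall q, O q -> O' q) -> has_nbhd V H p O'.
Proof. intros [[v [w [e [hv [eps [he h]]]]]]|[[u [v [w [e [hv [eps [he h]]]]]]]|[a [e [S h]]]]] hO.
  - left; exists v, w; split; auto; split; auto; exists eps; split; auto.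
  - right; left; exists u, v, w; split; auto; split; auto; exists eps; split; auto.
  - right; right; exists a; split; auto; exists S; auto.
Qed.

Lemma Chat_monoS S1 S2 a q : (forall z, In z S1 -> In z S2) -> Chat V H S2 a q -> Chat V H S1 a q.
Proof. intros hs [hv [[x [w [e [h1 h2]]]]|[[x [y [w [e [h1 h2]]]]]|[b [e [r [x [h1 [h2 h3]]]]]]]]];
  split; auto.
  - left; exists x, w; split; auto; split; auto; eapply in_C_monoS; eauto.
  - right; left; exists x, y, w; split; auto; split; auto; destruct h2; [left|right]; eapply in_C_monoS; eauto.
  - right; right; exists b; split; auto; exists r, x; split; auto; split; [eapply in_C_monoS|eapply tail_monoS]; eauto.
Qed.

Lemma has_nbhd_inter p O1 O2 : has_nbhd V H p O1 -> has_nbhd V H p O2 ->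
  has_nbhd V H p (fun q => O1 q /\ O2 q).
Proof.
  intros [[v [w [e [hv [eps [he h]]]]]]|[[u [v [w [e [hv [eps [he h]]]]]]]|[a [e [S h]]]]]
         [[v' [w' [e' [hv' [eps' [he' h']]]]]]|[[u' [v'' [w' [e' [hv' [eps' [he' h']]]]]]]|[a' [e' [S' h']]]]];
  subst; try discriminate.
  - injection e'; intro; subst. pose proof (vtx_uniq V v v' w' hv hv'); subst.
    left; exists v', w'; split; auto; split; auto; exists (Rmin eps eps'); split.
    apply Rmin_glb_lt; auto. intros w'' hw hlt. split; [apply h|apply h']; auto;
    pose proof (Rmin_l eps eps'); pose proof (Rmin_r eps eps'); lra.
  - injection e'; intro; subst. exfalso; eapply vtx_not_edge; eauto.
  - injection e'; intro; subst. exfalso; eapply vtx_not_edge; eauto.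
  - injection e'; intro; subst.
    right; left; exists u, v, w'; split; auto; split; auto; exists (Rmin eps eps'); split.
    apply Rmin_glb_lt; auto. pose proof (Rmin_l eps eps'); pose proof (Rmin_r eps eps').
    destruct (edge_support V H Hg u v u' v'' w' hv hv') as [[-> ->]|[-> ->]];
    intros w'' hw hlt; split; try (apply h; auto; lra).
    + apply h'; auto; lra.
    + apply h'. apply edge_swap; auto. destruct (edge_sum _ _ _ hw), (edge_sum _ _ _ hv).
      split_Rabs; lra.
  - injection e'; intro; subst. right; right; exists a'; split; auto; exists (S ++ S').
    intros q hq; split; [apply h|apply h']; eapply (Chat_monoS _ (S ++ S')); eauto; intros; apply in_or_app; auto.
Qed.

Lemma has_nbhd_True p : valid V H p -> has_nbhd V H p (fun _ => True).
Proof. destruct p as [w|a]; simpl.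
  - intros [[v hv]|[u [v hv]]].
    + left; exists v, w; split; auto; split; auto; exists 1; split; auto; lra.
    + right; left; exists u, v, w; split; auto; split; auto; exists 1; split; auto; lra.
  - intros _; right; right; exists a; split; auto; exists nil; auto.
Qed.

Lemma open_vnb v eps : 0 < eps <= 1 -> open_in V H (vnb V H v eps).
Proof. intros he p hp [w' [-> [hv hlt]]].
  destruct hv as [[x [h1 h2]]|[u [u' hu]]].
  - assert (x = v) by (destruct (classic (x = v)); auto; rewrite h2 in hlt; auto; lra). subst.
    left; exists v, w'; split; auto; split; [split; auto|]; exists eps; split; [lra|].
    intros w'' h1' h2'; exists w''; auto.
  - right; left; exists u, u', w'; split; auto; split; auto.
    exists (w' v - (1 - eps)); split; [lra|]. destruct (edge_sum _ _ _ hu).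
    intros w'' hw hlt'. exists w''; split; auto; split; [right; eauto|].
    destruct (edge_sum _ _ _ hw).
    destruct (edge_pos V H u u' w' v hu) as [->| ->]; [lra| |]; split_Rabs; lra.
Qed.

Lemma open_enb u v w eps : open_in V H (enb V H u v w eps).
Proof. intros p hp [w' [-> [he hlt]]].
  right; left; exists u, v, w'; split; auto; split; auto.
  exists (eps - Rabs (w' u - w u)); split; [lra|].
  intros w'' hw hl; exists w''; split; auto; split; auto. split_Rabs; lra.
Qed.

Lemma in_C_shift S a b r x y : is_end V H b -> b r -> in_C V H S a x -> tail_in V H S r x ->
  in_C V H S b y -> in_C V H S a y.
Proof. intros hb br [r'' [ar'' t'']] trx hy.
  pose proof (in_C_any V H S b r y Hg hb br hy) as try.
  exists r''; split; auto. eapply tail_conn; eauto. eapply tail_both; eauto.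
Qed.

Lemma open_Chat S a : open_in V H (Chat V H S a).
Proof. intros p hp [hv [[x [w [-> [h1 h2]]]]|[[x [y [w [-> [h1 h2]]]]]|[b [-> [r [x [h1 [h2 h3]]]]]]]]].
  - left; exists x, w; split; auto; split; auto; exists (1/2); split; [lra|].
    intros w'' hw hlt; split; auto.
    destruct hw as [[y [k1 k2]]|[u [u' hu]]].
    + assert (y = x) by (destruct (classic (y = x)); auto; rewrite k2 in hlt; auto; lra); subst.
      left; exists x, w''; split; auto; split; [split; auto|auto].
    + right; left; exists u, u', w''; split; auto; split; auto.
      destruct (edge_pos V H u u' w'' x hu) as [<-| <-]; auto; lra.
  - right; left; exists x, y, w; split; auto; split; auto; exists 1; split; [lra|].
    intros w'' hw _; split; [right; eauto|right; left; exists x, y, w''; auto].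
  - right; right; exists b; split; auto; exists S.
    assert (hb : is_end V H b) by exact hv.
    intros q [hq [[x' [w [-> [k1 k2]]]]|[[x' [y [w [-> [k1 k2]]]]]|[c [-> [r' [x' [k1 [k2 k3]]]]]]]]]; split; auto.
    + left; exists x', w; split; auto; split; auto; eapply in_C_shift; eauto.
    + right; left; exists x', y, w; split; auto; split; auto; destruct k2; [left|right]; eapply in_C_shift; eauto.
    + right; right; exists c; split; auto; exists r', x'; split; [exact k1|split; [eapply (in_C_shift S a b r x x'); eauto|exact k3]].
Qed.

End Nbhd.

Definition sep V H (p q : point V) := exists Np Nq, good V H p Np /\ good V H q Nq /\
  forall x, Np x -> Nq x -> False.

Section Sep.
Variable V : Type.
Variable H : V -> V -> Prop.
Hypothesis Hg : graph V H.
Hypothesis Hlf : locally_finite V H.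

Lemma good_vnb v w eps : vtx_pt V v w -> 0 < eps <= 1 -> good V H (P1 w) (vnb V H v eps).
Proof. intros hv he; split; [apply open_vnb; auto|split].
  - exists w; split; auto; split; [left; eauto|]. destruct hv; lra.
  - left; exists v, w; split; auto; split; auto; exists eps; split; [lra|].
    intros w' h1 h2; exists w'; auto.
Qed.

Lemma good_enb u v w eps : on_edge V H u v w -> 0 < eps -> good V H (P1 w) (enb V H u v w eps).
Proof. intros hv he; split; [apply open_enb; auto|split].
  - exists w; split; auto; split; auto. rewrite Rminus_diag, Rabs_R0; auto.
  - right; left; exists u, v, w; split; auto; split; auto; exists eps; split; auto.
    intros w' h1 h2; exists w'; auto.
Qed.

Lemma good_Chat S a : is_end V H a -> good V H (PEnd a) (Chat V H S a).
Proof. intros ha; split; [apply open_Chat; auto|split].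
  - split; auto. right; right; exists a; split; auto.
    pose proof ha as [r [hr hiff]]. destruct (ray_tail V H r S hr) as [x hx].
    assert (a r) by (apply hiff; split; auto; apply requiv_refl; auto).
    exists r, x; split; auto; split; auto; exists r; auto.
  - right; right; exists a; split; auto; exists S; auto.
Qed.

Lemma sep_sym p q : sep V H p q -> sep V H q p.
Proof. intros [N1 [N2 [a [b c]]]]; exists N2, N1; split; auto; split; auto; eauto. Qed.

Lemma sep_vv v v' w w' : vtx_pt V v w -> vtx_pt V v' w' -> w <> w' -> sep V H (P1 w) (P1 w').
Proof. intros h1 h2 hn. assert (v <> v') by (intro; subst; apply hn; eapply vtx_eq; eauto).
  exists (vnb V H v (1/2)), (vnb V H v' (1/2)); split; [apply good_vnb; auto; lra|].
  split; [apply good_vnb; auto; lra|].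
  intros x [a [-> [va la]]] [a' [e [_ la']]]. injection e; intros; subst.
  destruct (valid_bounds V H Hg a' va) as [_ hb]. specialize (hb v v' H0). lra.
Qed.

Lemma sep_ve v w1 u u' w2 : vtx_pt V v w1 -> on_edge V H u u' w2 -> sep V H (P1 w1) (P1 w2).
Proof. intros h1 h2. destruct (edge_sum V H u u' w2 h2) as [s [p1 p2]].
  destruct (classic (v = u)) as [->|n1].
  - exists (vnb V H u (w2 u' / 2)), (enb V H u u' w2 (w2 u' / 2)).
    split; [apply good_vnb; auto; lra|]. split; [apply good_enb; auto; lra|].
    intros x [a [-> [va la]]] [a' [e [ea la']]]. injection e; intros; subst.
    split_Rabs; lra.
  - destruct (classic (v = u')) as [->|n2].
    + exists (vnb V H u' (w2 u / 2)), (enb V H u u' w2 (w2 u / 2)).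
      split; [apply good_vnb; auto; lra|]. split; [apply good_enb; auto; lra|].
      intros x [a [-> [va la]]] [a' [e [ea la']]]. injection e; intros; subst.
      destruct (edge_sum V H u u' a' ea). split_Rabs; lra.
    + exists (vnb V H v (1/2)), (enb V H u u' w2 1).
      split; [apply good_vnb; auto; lra|]. split; [apply good_enb; auto; lra|].
      intros x [a [-> [va la]]] [a' [e [ea la']]]. injection e; intros; subst.
      destruct (edge_pos V H u u' a' v ea); auto; lra.
Qed.

Lemma sep_vE v w b : vtx_pt V v w -> is_end V H b -> sep V H (P1 w) (PEnd b).
Proof. intros h1 hb. destruct (Hlf v) as [l hl].
  exists (vnb V H v (1/2)), (Chat V H (v :: l) b).
  split; [apply good_vnb; auto; lra|]. split; [apply good_Chat; auto|].
  intros x [a [-> [va la]]] [_ [[y [a' [e [k1 k2]]]]|[[y [y' [a' [e [k1 k2]]]]]|[c [e _]]]]];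
    try discriminate; injection e; intros; subst.
  - apply in_C_notin in k2. destruct k1 as [k1 k3].
    destruct (classic (v = y)) as [->|n]. apply k2; left; auto. rewrite k3 in la; auto; lra.
  - destruct (edge_pos V H y y' a' v k1) as [<-| <-]; [lra| |];
    destruct k1 as [hk _]; destruct k2 as [k2|k2]; apply in_C_notin in k2; apply k2.
    + left; auto.
    + right; apply hl; auto.
    + right; apply hl; apply (proj1 Hg); auto.
    + left; auto.
Qed.

Lemma sep_ee_same u v w1 w2 : on_edge V H u v w1 -> on_edge V H u v w2 -> w1 <> w2 -> sep V H (P1 w1) (P1 w2).
Proof. intros h1 h2 hn. assert (w1 u <> w2 u) by (intro; apply hn; eapply edge_eq; eauto).
  set (d := Rabs (w1 u - w2 u) / 2).
  assert (0 < d) by (unfold d; assert (w1 u - w2 u <> 0) by lra; pose proof (Rabs_pos_lt _ H1); lra).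
  exists (enb V H u v w1 d), (enb V H u v w2 d).
  split; [apply good_enb; auto|]. split; [apply good_enb; auto|].
  intros x [a [-> [_ la]]] [a' [e [_ la']]]. injection e; intros; subst.
  unfold d in *. split_Rabs; lra.
Qed.

Lemma sep_ee u v w1 u' v' w2 : on_edge V H u v w1 -> on_edge V H u' v' w2 -> w1 <> w2 -> sep V H (P1 w1) (P1 w2).
Proof. intros h1 h2 hn.
  destruct (classic ((u = u' /\ v = v') \/ (u = v' /\ v = u'))) as [[[-> ->]|[-> ->]]|nc].
  - eapply sep_ee_same; eauto.
  - eapply sep_ee_same; eauto. apply edge_swap; auto.
  - exists (enb V H u v w1 1), (enb V H u' v' w2 1).
    split; [apply good_enb; auto; lra|]. split; [apply good_enb; auto; lra|].
    intros x [a [-> [ea _]]] [a' [e [ea' _]]]. injection e; intros; subst.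
    apply nc; eapply edge_support; eauto.
Qed.

Lemma sep_eE u v w b : on_edge V H u v w -> is_end V H b -> sep V H (P1 w) (PEnd b).
Proof. intros h1 hb. exists (enb V H u v w 1), (Chat V H (u :: v :: nil) b).
  split; [apply good_enb; auto; lra|]. split; [apply good_Chat; auto|].
  intros x [a [-> [ea _]]] [_ [[y [a' [e [k1 k2]]]]|[[y [y' [a' [e [k1 k2]]]]]|[c [e _]]]]];
    try discriminate; injection e; intros; subst.
  - eapply vtx_not_edge; eauto.
  - destruct (edge_support V H Hg _ _ _ _ _ ea k1) as [[<- <-]|[<- <-]];
    destruct k2 as [k2|k2]; apply in_C_notin in k2; apply k2; simpl; auto.
Qed.

Lemma two_sides S a b ra rb s t : is_end V H a -> is_end V H b -> a ra -> b rb ->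
  (~ exists x, tail_in V H S ra x /\ tail_in V H S rb x) ->
  in_C V H S a s -> in_C V H S b t -> (s = t \/ H s t) -> False.
Proof. intros ha hb ara brb hn hs ht hst. apply hn.
  pose proof (in_C_any V H S a ra s Hg ha ara hs) as t1.
  pose proof (in_C_any V H S b rb t Hg hb brb ht) as t2.
  exists t; split; auto. destruct hst as [->|hst]; auto.
  eapply tail_conn; eauto. split; [eapply in_C_notin; eauto|]. split; [eapply in_C_notin; eauto|].
  apply rt_step; split; auto; split; eapply in_C_notin; eauto.
Qed.

Lemma sep_EE a b : is_end V H a -> is_end V H b -> a <> b -> sep V H (PEnd a) (PEnd b).
Proof. intros ha hb hn.
  pose proof ha as [ra [hra ha']]. pose proof hb as [rb [hrb hb']].
  assert (ara : a ra) by (apply ha'; split; auto; apply requiv_refl; auto).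
  assert (brb : b rb) by (apply hb'; split; auto; apply requiv_refl; auto).
  assert (~ ray_equiv V H ra rb) by (intro; apply hn; eapply end_ext; eauto).
  apply not_all_ex_not in H0 as [S hS].
  exists (Chat V H S a), (Chat V H S b).
  split; [apply good_Chat; auto|]. split; [apply good_Chat; auto|].
  intros x [_ [[y [w [e [k1 k2]]]]|[[y [y' [w [e [k1 k2]]]]]|[c [e [r [z [k1 [k2 k3]]]]]]]]]
           [vx [[y0 [w0 [e0 [j1 j2]]]]|[[y0 [y0' [w0 [e0 [j1 j2]]]]]|[c0 [e0 [r0 [z0 [j1 [j2 j3]]]]]]]]];
    subst; try discriminate; injection e0; intros; subst.
  - pose proof (vtx_uniq V _ _ _ k1 j1); subst. apply (two_sides S a b ra rb _ _ ha hb ara brb hS k2 j2); auto.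
  - eapply vtx_not_edge; eauto.
  - eapply vtx_not_edge; eauto.
  - destruct (edge_support V H Hg _ _ _ _ _ k1 j1) as [[<- <-]|[<- <-]];
    pose proof (proj1 Hg _ _ (proj1 k1)); pose proof (proj1 k1);
    destruct k2 as [k2|k2]; destruct j2 as [j2|j2];
    apply (two_sides S a b ra rb _ _ ha hb ara brb hS k2 j2); auto.
  - assert (in_C V H S a z0) by (eapply (in_C_shift V H Hg S a c0 r z z0); eauto; exists r0; auto).
    apply (two_sides S a b ra rb _ _ ha hb ara brb hS H0 j2); auto.
Qed.

Lemma separate p q : valid V H p -> valid V H q -> p <> q -> sep V H p q.
Proof.
  destruct p as [w|a], q as [w'|b]; simpl;
  [intros [[v hv]|[u [v hv]]] [[v' hv']|[u' [v' hv']]] hn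
  |intros [[v hv]|[u [v hv]]] hb hn
  |intros ha [[v' hv']|[u' [v' hv']]] hn
  |intros ha hb hn].
  - apply sep_vv with v v'; auto; congruence.
  - eapply sep_ve; eauto.
  - apply sep_sym; eapply sep_ve; eauto.
  - eapply sep_ee; eauto; congruence.
  - eapply sep_vE; eauto.
  - eapply sep_eE; eauto.
  - apply sep_sym; eapply sep_vE; eauto.
  - apply sep_sym; eapply sep_eE; eauto.
  - apply sep_EE; auto; congruence.
Qed.

End Sep.

Lemma compact_interval (Q : (R -> Prop) -> Prop) a b :
  a <= b ->
  (forall T T' : R -> Prop, (forall u, T u -> T' u) -> Q T' -> Q T) ->
  (forall T1 T2, Q T1 -> Q T2 -> Q (fun u => T1 u \/ T2 u)) ->
  (forall t, a <= t <= b -> exists eps, 0 < eps /\ Q (fun u => t - eps < u < t + eps)) ->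
  Q (fun u => a <= u <= b).
Proof.
  intros hab hmono hun hloc.
  set (E := fun s => a <= s <= b /\ Q (fun u => a <= u <= s)).
  assert (Ea : E a).
  { split; [lra|]. destruct (hloc a) as [e [he hq]]; [lra|].
    eapply hmono; [|exact hq]. intros u hu; simpl; lra. }
  assert (hbd : bound E) by (exists b; intros s [hs _]; lra).
  destruct (completeness E hbd (ex_intro _ a Ea)) as [c [hub hlub]].
  assert (ac : a <= c) by (apply hub; auto).
  assert (cb : c <= b) by (apply hlub; intros s [hs _]; lra).
  destruct (hloc c) as [e [he hq]]; [lra|].
  assert (exists s, E s /\ c - e < s) as [s [[hs1 hs2] hs]].
  { apply NNPP; intro hn. assert (c <= c - e); [|lra].
    apply hlub. intros s hs. apply Rnot_lt_le. intro; apply hn; eauto. }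
  set (m := Rmin (c + e/2) b).
  assert (hm1 : m <= c + e/2) by apply Rmin_l.
  assert (hm2 : m <= b) by apply Rmin_r.
  assert (hm3 : b <= c + e/2 -> m = b) by (intros; unfold m; apply Rmin_right; auto).
  assert (hm4 : c + e/2 <= b -> m = c + e/2) by (intros; unfold m; apply Rmin_left; auto).
  assert (Em : E m).
  { split. destruct (Rle_dec b (c + e/2)); [rewrite hm3|rewrite hm4]; lra.
    eapply hmono; [|apply (hun _ _ hs2 hq)]. intros u hu; simpl.
    destruct (Rle_dec u s); [left; lra|right; lra]. }
  assert (m <= c) by (apply hub; auto).
  destruct (Rle_dec b (c + e/2)); [|rewrite hm4 in H; lra].
  rewrite hm3 in Em; auto. apply Em.
Qed.

Lemma circle_param z : on_circle z -> exists t, 0 <= t <= 2 * PI /\ z = (cos t, sin t).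
Proof. destruct z as [x y]; unfold on_circle; simpl; intro h.
  assert (hx : -1 <= x <= 1) by nra. pose proof (acos_bound x). pose proof PI_RGT_0.
  assert (hy2 : 1 - x² = y²) by (unfold Rsqr; lra).
  destruct (Rle_dec 0 y).
  - exists (acos x); split; [lra|]. rewrite cos_acos, sin_acos, hy2, sqrt_Rsqr; auto.
  - exists (2 * PI - acos x); split; [lra|].
    rewrite cos_minus, sin_minus, cos_2PI, sin_2PI, cos_acos, sin_acos, hy2; auto.
    rewrite (Rsqr_neg y), sqrt_Rsqr; [|lra]. f_equal; ring.
Qed.

Lemma cs_cont t eps : 0 < eps -> exists d, 0 < d /\ forall u, Rabs (u - t) < d ->
  Rabs (cos u - cos t) < eps /\ Rabs (sin u - sin t) < eps.
Proof. intros he.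
  destruct (continuity_cos t eps he) as [d1 [hd1 h1]].
  destruct (continuity_sin t eps he) as [d2 [hd2 h2]].
  exists (Rmin d1 d2); split; [apply Rmin_glb_lt; auto|].
  intros u hu. destruct (Req_dec u t) as [->|hne].
  - rewrite !Rminus_diag, Rabs_R0; auto.
  - pose proof (Rmin_l d1 d2); pose proof (Rmin_r d1 d2). split.
    + apply (h1 u); split; [split; [exact I|auto]|]. simpl; unfold R_dist; lra.
    + apply (h2 u); split; [split; [exact I|auto]|]. simpl; unfold R_dist; lra.
Qed.

Definition gmap V (G : V -> V -> Prop) (p : point V) : point V :=
  match p with
  | P1 w => P1 w
  | PEnd a => PEnd (fun r' => is_ray V G r' /\ exists r, a r /\ ray_equiv V G r r')
  end.

Section Map.
Variable V : Type.
Variables G F : V -> V -> Prop.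
Hypothesis Gg : graph V G.
Hypothesis Fg : graph V F.
Hypothesis sub : subgraph V F G.
Hypothesis faith : forall r1 r2, is_ray V F r1 -> is_ray V F r2 ->
     (ray_equiv V F r1 r2 <-> ray_equiv V G r1 r2).

Lemma ray_mono r : is_ray V F r -> is_ray V G r.
Proof. intros [a b]; split; auto. Qed.

Lemma edge_mono u v w : on_edge V F u v w -> on_edge V G u v w.
Proof. intros [h x]; split; auto. Qed.

Lemma a_sub a r : is_end V F a -> a r ->
  (fun r' => is_ray V G r' /\ exists r, a r /\ ray_equiv V G r r') r.
Proof. intros ha ar. pose proof (ray_mono r (end_ray V F a r ha ar)).
  split; auto. exists r; split; auto. apply requiv_refl; auto. Qed.

Lemma end_mono a : is_end V F a -> is_end V G (fun r' => is_ray V G r' /\ exists r, a r /\ ray_equiv V G r r').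
Proof. intros ha. pose proof ha as [r0 [hr0 h0]].
  assert (ar0 : a r0) by (apply h0; split; auto; apply requiv_refl; auto).
  exists r0; split; [apply ray_mono; auto|]. intros r'; split.
  - intros [hr' [r [ar e]]]. split; auto.
    apply (requiv_trans V G r0 r r' Gg); auto. apply faith; auto. apply (end_ray V F a); auto.
    apply (end_equiv V F a r0 r Fg ha ar0 ar).
  - intros [hr' e]; split; auto; exists r0; auto.
Qed.

Lemma valid_mono p : valid V F p -> valid V G (gmap V G p).
Proof. destruct p as [w|a]; simpl.
  - intros [h|[u [v h]]]; [left; auto|right; exists u, v; apply edge_mono; auto].
  - apply end_mono.
Qed.

Lemma in_C_map S a x : is_end V F a -> in_C V F S a x ->
  in_C V G S (fun r' => is_ray V G r' /\ exists r, a r /\ ray_equiv V G r r') x.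
Proof. intros ha [r [ar t]]. exists r; split; [apply a_sub; auto|eapply tail_monoH; eauto]. Qed.

Lemma gmap_inj p q : valid V F p -> valid V F q -> gmap V G p = gmap V G q -> p = q.
Proof. destruct p as [w|a], q as [w'|b]; simpl; intros hp hq e; try discriminate.
  - injection e; intros; subst; auto.
  - injection e; intro e'. pose proof hp as [ra [hra ha]].
    assert (ara : a ra) by (apply ha; split; auto; apply requiv_refl; auto).
    pose proof (a_sub a ra hp ara) as h. rewrite e' in h. destruct h as [_ [r [br eq]]].
    f_equal. symmetry. apply (end_ext V F b a r ra Fg hq hp br ara).
    apply faith; auto. apply (end_ray V F b); auto.
Qed.

Lemma Chat_map S a q : is_end V F a -> Chat V F S a q ->
  Chat V G S (fun r' => is_ray V G r' /\ exists r, a r /\ ray_equiv V G r r') (gmap V G q).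
Proof. intros ha [hv [[x [w [-> [h1 h2]]]]|[[x [y [w [-> [h1 h2]]]]]|[b [-> [r [x [h1 [h2 h3]]]]]]]]];
  split; try (apply valid_mono; auto); simpl.
  - left; exists x, w; split; auto; split; auto; apply in_C_map; auto.
  - right; left; exists x, y, w; split; auto; split; [apply edge_mono; auto|].
    destruct h2; [left|right]; apply in_C_map; auto.
  - right; right; eexists; split; [reflexivity|]. exists r, x; split; [apply a_sub; auto|].
    split; [apply in_C_map; auto|eapply tail_monoH; eauto].
Qed.

Lemma open_pullback O : open_in V G O -> open_in V F (fun p => O (gmap V G p)).
Proof. intros hO p hp hOp. pose proof (hO _ (valid_mono p hp) hOp) as hn.
  destruct p as [w|a]; simpl in hn.
  - destruct hn as [[v [w0 [e [hv [eps [he h]]]]]]|[[u [v [w0 [e [hv [eps [he h]]]]]]]|[a [e _]]]];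
    try discriminate; injection e; intros; subst.
    + left; exists v, w0; split; auto; split; auto; exists eps; split; auto.
      intros w' hw hl; apply (h w'); auto; apply (valid_mono (P1 w')); auto.
    + simpl in hp; destruct hp as [[x hx]|[u' [v' hp]]]; [exfalso; apply (vtx_not_edge V G Gg x u v w0 hx hv)|].
      right; left; exists u', v', w0; split; auto; split; auto; exists eps; split; auto.
      destruct (edge_support V G Gg u v u' v' w0 hv (edge_mono _ _ _ hp)) as [[-> ->]|[-> ->]].
      * intros w' hw hl; apply (h w'); auto; apply edge_mono; auto.
      * intros w' hw hl; apply (h w'). apply edge_swap; auto; apply edge_mono; auto.
        destruct (edge_sum V F u' v' w' hw), (edge_sum V F u' v' w0 hp). split_Rabs; lra.
  - destruct hn as [[v [w0 [e _]]]|[[u [v [w0 [e _]]]]|[a0 [e [S h]]]]]; try discriminate.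
    injection e; intros; subst.
    right; right; exists a; split; auto; exists S. intros q hq. apply h. apply Chat_map; auto.
Qed.

End Map.

Theorem lemma1 (V : Type) (G F : V -> V -> Prop) :
  graph V G -> graph V F -> infinite_type V -> locally_finite V G ->
  subgraph V F G -> faithful V F G ->
  has_ham_circle F -> has_ham_circle G.
Proof.
  intros Gg Fg _ Glf sub [_ faith] [f [f1 [f2 [f3 [f4 f5]]]]].
  assert (faith' : forall r1 r2, is_ray V F r1 -> is_ray V F r2 ->
     (ray_equiv V F r1 r2 <-> ray_equiv V G r1 r2)) by exact faith.
  assert (cont : forall O, open_in V G O -> circ_open (fun z => O (gmap V G (f z)))).
  { intros O hO. apply (f3 (fun p => O (gmap V G p))). eapply (open_pullback V G F); eauto. }
  assert (inj : forall z z', on_circle z -> on_circle z' -> gmap V G (f z) = gmap V G (f z') -> z = z').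
  { intros z z' c c' e. apply f2; auto. eapply (gmap_inj V G F); eauto. }
  exists (fun z => gmap V G (f z)). split; [|split; [|split; [|split]]].
  - intros z c; eapply (valid_mono V G F); eauto.
  - exact inj.
  - exact cont.
  - intros U hU.
    exists (fun q => ~ exists z, on_circle z /\ ~ U z /\ q = gmap V G (f z)). split.
    + intros q hq hW.
      set (Q := fun T : R -> Prop => exists N, has_nbhd V G q N /\
              forall u, T u -> ~ U (cos u, sin u) -> ~ N (gmap V G (f (cos u, sin u)))).
      assert (circ : forall u, on_circle (cos u, sin u)).
      { intro u; unfold on_circle; simpl. pose proof (sin2_cos2 u). unfold Rsqr in *; lra. }
      assert (HQ : Q (fun u => 0 <= u <= 2 * PI)).
      { apply compact_interval.
        - pose proof PI_RGT_0; lra.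
        - intros T T' hs [N [hN hN']]; exists N; split; auto.
        - intros T1 T2 [N1 [h1 h1']] [N2 [h2 h2']]. exists (fun x => N1 x /\ N2 x).
          split; [apply has_nbhd_inter; auto|]. intros u [hu|hu] nU [a b]; [eapply h1'|eapply h2']; eauto.
        - intros t _. set (z := (cos t, sin t)).
          destruct (classic (U z)) as [hUz|hUz].
          + destruct (hU z (circ t) hUz) as [eps [he hbox]].
            destruct (cs_cont t eps he) as [d [hd hcs]].
            exists d; split; auto. exists (fun _ => True); split; [apply has_nbhd_True; auto|].
            intros u hu nU _. apply nU. destruct (hcs u) as [k1 k2]; [split_Rabs; lra|].
            apply hbox; auto.
          + assert (hne : gmap V G (f z) <> q) by (intro e; apply hW; exists z; split; [apply circ|split; auto]).
            destruct (separate V G Gg Glf (gmap V G (f z)) q) as [Np [Nq [[oNp [cNp _]] [[_ [_ hNq]] dis]]]]; auto.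
            { eapply (valid_mono V G F); eauto. }
            destruct (cont Np oNp z (circ t) cNp) as [eps [he hbox]].
            destruct (cs_cont t eps he) as [d [hd hcs]].
            exists d; split; auto. exists Nq; split; auto.
            intros u hu nU hN. destruct (hcs u) as [k1 k2]; [split_Rabs; lra|].
            apply (dis _ (hbox _ (circ u) k1 k2) hN). }
      destruct HQ as [N [hN hN']]. eapply has_nbhd_mono; [exact hN|].
      intros x hx [z [c [nU ->]]]. destruct (circle_param z c) as [t [ht ->]].
      apply (hN' t ht nU hx).
    + intros z c; split.
      * intros hz [z' [c' [nU e]]]. apply inj in e; auto. subst; auto.
      * intros hW. apply NNPP; intro nU. apply hW; exists z; auto.
  - intros v. destruct (f5 v) as [z [c [w [e hv]]]]. exists z; split; auto.
    exists w; rewrite e; split; auto.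
Qed.
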